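(* Let $x_e$ ($e\ge1$) be indeterminates and set $x_0=1$. Then in $\mathbb{Z}[x_1,x_2,\dots][[t]]$, $$\sum_{n=0}^\infty\sum_{\sigma\in\mathcal{S}(n)}N_\sigma\Big(\prod_{1^e\in\sigma}x_e\Big)t^n=\Big(\sum_{n=0}^\infty x_nt^n\Big)^p(1-t)^p(1-pt)^{-1},$$ where the product runs over the symbols of $\sigma$ of the form $1^e$ (i.e. with $d_j=1$), counted with multiplicity.
   Context: Fix a prime $p$. A splitting type of degree $n$ is a finite multiset $\sigma=(d_1^{e_1}\,d_2^{e_2}\cdots d_t^{e_t})$ of symbols $d_j^{e_j}$ with $d_j,e_j$ positive integers and $\sum_j d_je_j=n$; $\mathcal{S}(n)$ denotes the set of splitting types of degree $n$ ($\mathcal{S}(0)$ consists of the empty type). A monic $f\in\mathbb{F}_p[x]$ of degree $n$ has splitting type $\sigma$ if $f=\prod_{j=1}^tf_j^{e_j}$ with $f_j$ distinct monic irreducible polynomials with $\deg f_j=d_j$. $N_\sigma$ is the number of monic polynomials in $\mathbb{F}_p[x]$ of splitting type $\sigma$. *)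

(* Defs.v *)
From HB Require Import structures.
From mathcomp Require Import all_boot all_algebra.
From mathcomp Require Import boolp.

Set Implicit Arguments.
Unset Strict Implicit.
Unset Printing Implicit Defensive.

Import GRing.Theory.
Local Open Scope ring_scope.

(* A splitting type (d_1^{e_1} ... d_t^{e_t}) is a multiset of symbols d^e,
   represented as a sequence of pairs (d, e), sorted for the lexicographic
   order so that each multiset has exactly one representative. *)
Definition lepair (a b : nat * nat) : bool :=
  (a.1 < b.1)%N || ((a.1 == b.1) && (a.2 <= b.2)%N).

Fixpoint seqs_upto (T : Type) (A : seq T) (k : nat) : seq (seq T) :=
  if k is k'.+1 then [::] :: [seq a :: s | a <- A, s <- seqs_upto A k']
  else [:: [::]].

Definition stdeg (s : seq (nat * nat)) : nat := \sum_(de <- s) de.1 * de.2.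

Definition stypes (n : nat) : seq (seq (nat * nat)) :=
  [seq s <- seqs_upto [seq (d, e) | d <- iota 1 n, e <- iota 1 n] n
     | sorted lepair s & stdeg s == n].

Definition has_stype (p : nat) (f : {poly 'F_p}) (sigma : seq (nat * nat))
  : Prop :=
  exists s : seq ({poly 'F_p} * nat),
    [/\ uniq [seq ge.1 | ge <- s],
        all (fun ge : {poly 'F_p} * nat => (ge.1 \is monic) && (0 < ge.2)%N) s,
        (forall ge, ge \in s -> irreducible_poly ge.1),
        f = \prod_(ge <- s) ge.1 ^+ ge.2
      & perm_eq [seq ((size (ge.1 : {poly 'F_p})).-1, ge.2) | ge <- s] sigma].

Definition mkmonic (p n : nat) (c : n.-tuple 'F_p) : {poly 'F_p} :=
  'X^n + \sum_(i < n) c`_i *: 'X^i.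

(* N_sigma : number of monic polynomials of F_p[x] of splitting type sigma
   (every such polynomial has degree stdeg sigma). *)
Definition Nst (p : nat) (sigma : seq (nat * nat)) : nat :=
  #|[set c : (stdeg sigma).-tuple 'F_p | `[< has_stype (mkmonic c) sigma >]]|.

Definition psmul (R : comNzRingType) (f g : nat -> R) : nat -> R :=
  fun n => \sum_(i < n.+1) f i * g (n - i)%N.
Definition psone (R : comNzRingType) : nat -> R := fun n => (n == 0%N)%:R.
Definition psexp (R : comNzRingType) (f : nat -> R) (k : nat) : nat -> R :=
  iter k (psmul f) (psone R).
Definition ps_one_minus_t (R : comNzRingType) : nat -> R :=
  fun n => if n == 0%N then 1 else if n == 1%N then -1 else 0.
Definition ps_inv_one_minus (R : comNzRingType) (c : R) : nat -> R :=
  fun n => c ^+ n.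

(* Main.v *)
Require Import Defs.
From HB Require Import structures.
From mathcomp Require Import all_boot all_algebra.
From mathcomp Require Import boolp.
From mathcomp Require Import zify.
Set Warnings "-notation-overridden -ambiguous-paths".
Import GRing.Theory.
Local Open Scope ring_scope.


Section PS.
Variable R : comNzRingType.
Implicit Types f g h : nat -> R.

Definition tr (N : nat) f : {poly R} := \poly_(i < N) f i.

Lemma psmul_tr f g N n : (n < N)%N -> psmul f g n = (tr N f * tr N g)`_n.
Proof.
move=> nN; rewrite coefM /psmul; apply: eq_bigr => [[i /= Hi]] _.
rewrite !coef_poly ifT; last by apply: leq_ltn_trans nN; rewrite -ltnS.
by rewrite ifT // (leq_ltn_trans (leq_subr _ _) nN).
Qed.

Lemma coefM_loc (r q1 q2 : {poly R}) n :
  (forall i, (i <= n)%N -> q1`_i = q2`_i) -> (r * q1)`_n = (r * q2)`_n.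
Proof.
move=> H; rewrite !coefM; apply: eq_bigr => [[i /= Hi]] _.
by rewrite H // leq_subr.
Qed.

Lemma psmulC f g : psmul f g = psmul g f.
Proof.
apply: funext => n; rewrite (@psmul_tr _ _ n.+1) // mulrC -psmul_tr //.
Qed.

Lemma psmulA f g h : psmul f (psmul g h) = psmul (psmul f g) h.
Proof.
apply: funext => n; rewrite (@psmul_tr _ _ n.+1) //.
rewrite (@coefM_loc _ _ (tr n.+1 g * tr n.+1 h)); last first.
  move=> i Hi; rewrite coef_poly ifT; last by rewrite ltnS.
  by apply: psmul_tr; rewrite ltnS.
rewrite [RHS](@psmul_tr _ _ n.+1) // [in RHS]mulrC.
rewrite [RHS](@coefM_loc _ _ (tr n.+1 f * tr n.+1 g)); last first.
  move=> i Hi; rewrite coef_poly ifT; last by rewrite ltnS.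
  by apply: psmul_tr; rewrite ltnS.
by rewrite (mulrC (tr n.+1 h)) mulrA.
Qed.

Definition psones : nat -> R := fun _ => 1.

Lemma omt_ones : psmul (@ps_one_minus_t R) psones = psone R.
Proof.
apply: funext => n; rewrite /psmul /psone /psones /ps_one_minus_t.
case: n => [|n]; first by rewrite big_ord1 /= mulr1.
rewrite big_ord_recl big_ord_recl /= mulr1 mulr1.
rewrite big1 ?addr0 ?subrr //; move=> i _; rewrite /bump /=.
by rewrite mul0r.
Qed.

Lemma psmul_one f : psmul (psone R) f = f.
Proof.
apply: funext => n; rewrite /psmul big_ord_recl /= /psone /= mul1r subn0.
by rewrite big1 ?addr0 // => i _; rewrite mul0r.
Qed.

Lemma iter_ps (x y z : nat -> R) k :
  iter k (fun h => psmul x (psmul y h)) z = psmul (psexp x k) (psmul (psexp y k) z).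
Proof.
elim: k => [|k IH] /=; first by rewrite !psmul_one.
rewrite IH /= -[RHS]psmulA; congr psmul.
rewrite psmulA [psmul y _]psmulC -psmulA; congr psmul.
by rewrite psmulA.
Qed.
End PS.

Section Mons.
Variable p : nat.
Local Notation F := 'F_p.
Local Notation poly := {poly 'F_p}.

Lemma coef_mkmonic n (c : n.-tuple F) i :
  (mkmonic c)`_i = (i == n)%:R + (if (i < n)%N then c`_i else 0).
Proof. by rewrite /mkmonic -poly_def coefD coefXn coef_poly. Qed.

Lemma size_mkmonic n (c : n.-tuple F) : size (mkmonic c) = n.+1.
Proof.
by rewrite /mkmonic -poly_def size_polyDl size_polyXn // ltnS size_poly.
Qed.

Lemma monic_mkmonic n (c : n.-tuple F) : mkmonic c \is monic.
Proof.
rewrite monicE /lead_coef size_mkmonic /= coef_mkmonic eqxx ltnn.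
by rewrite addr0.
Qed.

Definition mons n : seq poly := map (@mkmonic p n) (enum {: n.-tuple F}).

Lemma mkmonic_inj n : injective (@mkmonic p n).
Proof.
move=> c1 c2 E; apply: val_inj; apply: (@eq_from_nth _ 0).
  by rewrite !size_tuple.
move=> i; rewrite size_tuple => Hi.
have := congr1 (fun q : poly => q`_i) E.
by rewrite !coef_mkmonic Hi (ltn_eqF Hi) !add0r.
Qed.

Lemma mons_uniq n : uniq (mons n).
Proof. by rewrite map_inj_uniq ?enum_uniq //; apply: mkmonic_inj. Qed.

Lemma mem_mons n f : (f \in mons n) = (f \is monic) && (size f == n.+1).
Proof.
apply/idP/idP.
  by case/mapP => c _ ->; rewrite monic_mkmonic size_mkmonic eqxx.
case/andP => mf /eqP sf.
have -> : f = mkmonic [tuple f`_i | i < n].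
  apply/polyP => i; rewrite coef_mkmonic.
  case: ltnP => Hi.
    by rewrite (ltn_eqF Hi) add0r -[i]/(nat_of_ord (Ordinal Hi)) nth_mktuple.
  rewrite addr0; case: eqP => [->|/eqP Hne].
    by move/monicP: mf; rewrite /lead_coef sf.
  by rewrite nth_default // sf ltn_neqAle eq_sym Hne.
by apply: map_f; rewrite mem_enum.
Qed.

Lemma sum_mons (R : comNzRingType) n (G : poly -> R) :
  \sum_(f <- mons n) G f = \sum_(c : n.-tuple F) G (mkmonic c).
Proof. by rewrite big_map big_enum. Qed.

End Mons.

Section Rec.
Variable p : nat.
Variable R : comNzRingType.
Variable x : nat -> R.
Local Notation F := 'F_p.
Local Notation poly := {poly 'F_p}.

Definition W (S : seq F) (f : poly) : R := \prod_(a <- S) x (mup a f).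
Definition A (S : seq F) (n : nat) : R := \sum_(f <- mons p n) W S f.

Lemma split_mons (b : F) e n : (e <= n)%N ->
  perm_eq [seq f <- mons p n | mup b f == e]
          [seq ('X - b%:P) ^+ e * g | g <- [seq g <- mons p (n - e) | ~~ root g b]].
Proof.
move=> en.
have mXe : ('X - b%:P) ^+ e \is monic by apply: monic_exp; apply: monicXsubC.
have nXe : ('X - b%:P) ^+ e != 0 by apply: monic_neq0.
apply: uniq_perm.
- by rewrite filter_uniq // mons_uniq.
- rewrite map_inj_uniq ?filter_uniq ?mons_uniq //; exact: mulfI.
move=> f; rewrite mem_filter mem_mons; apply/andP/mapP.
  case=> /eqP mf /andP[monf /eqP sf].
  have f0 : f != 0 by apply: monic_neq0.
  have dv : ('X - b%:P) ^+ e %| f by rewrite -mup_geq // mf.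
  set g := f %/ ('X - b%:P) ^+ e.
  have hf : f = ('X - b%:P) ^+ e * g by rewrite mulrC /g divpK.
  have g0 : g != 0 by apply: contra_neq f0; rewrite hf => ->; rewrite mulr0.
  exists g => //.
  rewrite mem_filter mem_mons.
  have mg : g \is monic by rewrite -(monicMl _ mXe) -hf.
  rewrite mg /=; apply/andP; split.
    apply/negP => rg.
    have : (e.+1 <= mup b f)%N.
      rewrite mup_geq // hf exprSr dvdp_mul2l //.
      by rewrite -root_factor_theorem.
    by rewrite mf ltnn.
  move: sf; rewrite hf size_monicM // size_exp_XsubC => sf.
  rewrite addSn /= in sf; apply/eqP; lia.
case=> g; rewrite mem_filter mem_mons => /andP[rg /andP[mg /eqP sg]] ->.
have g0 : g != 0 by apply: monic_neq0.
rewrite mupM // mup_XsubCX eqxx mupNroot // addn0 eqxx; split => //.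
rewrite monicMl // mg /= size_monicM // size_exp_XsubC sg.
apply/eqP; lia.
Qed.

Lemma mup_bound (b : F) n f : f \in mons p n -> (mup b f < n.+1)%N.
Proof.
rewrite mem_mons => /andP[mf /eqP sf].
have f0 : f != 0 by apply: monic_neq0.
rewrite ltnS mup_leq //; apply/negP => /(dvdp_leq f0).
by rewrite size_exp_XsubC sf ltnn.
Qed.

Lemma sum_split (b : F) n (G : poly -> R) :
  \sum_(f <- mons p n) G f =
  \sum_(e < n.+1) \sum_(g <- mons p (n - e) | ~~ root g b) G (('X - b%:P) ^+ e * g).
Proof.
rewrite (eq_big_seq (fun f => \sum_(e < n.+1 | mup b f == e) G f)); last first.
  move=> f fm; rewrite (big_pred1 (Ordinal (@mup_bound b n f fm))) //.
rewrite (eq_bigr (fun f => \sum_(e < n.+1) if mup b f == e then G f else 0)); last first.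
  by move=> f _; rewrite big_mkcond.
rewrite exchange_big; apply: eq_bigr => e _.
rewrite -big_mkcond -big_filter.
rewrite (perm_big _ (@split_mons b e n (ltn_ord e : (e <= n)%N))) /=.
by rewrite big_map big_filter.
Qed.

Lemma W_mul (S : seq F) (b : F) e g : b \notin S ->
  W S (('X - b%:P) ^+ e * g) = W S g.
Proof.
move=> bS; rewrite /W big_seq [RHS]big_seq; apply: eq_bigr => a aS.
congr x; apply: mupMr.
case: e => [|e]; first by rewrite expr0 root1.
rewrite root_exp_XsubC; apply/eqP => E; move: bS; by rewrite -E aS.
Qed.

Lemma A_cons (S : seq F) (b : F) : b \notin S ->
  A (b :: S) = psmul x (psmul (@ps_one_minus_t R) (A S)).
Proof.
move=> bS.
pose Bv n := \sum_(g <- mons p n | ~~ root g b) W S g.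
have E1 : A (b :: S) = psmul x Bv.
  apply: funext => n; rewrite /A (sum_split b) /psmul; apply: eq_bigr => e _.
  rewrite /Bv mulr_sumr big_seq_cond [RHS]big_seq_cond; apply: eq_bigr => g.
  case/andP => gm rg.
  have g0 : g != 0 by move: gm; rewrite mem_mons => /andP[/monic_neq0].
  rewrite /W big_cons -/(W S _) -/(W S _) W_mul //.
  rewrite (mupM _ (monic_neq0 (monic_exp e (monicXsubC b))) g0). rewrite (mup_XsubCX e b b) eqxx (mupNroot rg). by rewrite addn0.
have E2 : A S = psmul (psones R) Bv.
  apply: funext => n; rewrite /A (sum_split b) /psmul; apply: eq_bigr => e _.
  rewrite /Bv /psones mul1r big_seq_cond [RHS]big_seq_cond; apply: eq_bigr => g _.
  by rewrite W_mul.
by rewrite E1 E2; congr psmul; rewrite psmulA omt_ones psmul_one.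
Qed.

Lemma A_nil : prime p -> A [::] = ps_inv_one_minus (p%:R : R).
Proof.
move=> pp; apply: funext => n; rewrite /A /W sum_mons.
under eq_bigr do rewrite big_nil.
by rewrite sumr_const card_tuple card_Fp // /ps_inv_one_minus natrX.
Qed.

Lemma A_iter (S : seq F) : prime p -> uniq S ->
  A S = iter (size S) (fun h => psmul x (psmul (@ps_one_minus_t R) h))
             (ps_inv_one_minus (p%:R : R)).
Proof.
move=> pp; elim: S => [|b S IH] /=; first by rewrite A_nil.
by case/andP => bS uS; rewrite A_cons // IH.
Qed.

End Rec.

Section Fac.
Local Set Implicit Arguments. Local Unset Strict Implicit.
Variable K : fieldType.
Local Notation poly := {poly K}.
Implicit Types f g h : poly.

Lemma irred_coprime g h : irreducible_poly g -> ~~ (g %| h) -> coprimep g h.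
Proof.
move=> ig ngh; have [d1|dg] := irredp_XsubCP ig (dvdp_gcdl g h).
  by rewrite /coprimep size_poly_eq1.
by move: (dvdp_gcdr g h); rewrite (eqp_dvdl _ dg) (negPf ngh).
Qed.

Lemma irred_dvd_exp g h k : irreducible_poly g -> g %| h ^+ k -> g %| h.
Proof.
move=> ig; elim: k => [|k IH].
  by rewrite expr0 dvdp1 => /eqP s1; move: (ig.1); rewrite s1.
rewrite exprS; case gh: (g %| h) => //.
by rewrite Gauss_dvdpr ?irred_coprime ?gh // => /IH; rewrite gh.
Qed.

Lemma irred_dvd_prod (I : eqType) (l : seq I) (G : I -> poly) g :
  irreducible_poly g -> g %| \prod_(i <- l) G i -> exists2 i, i \in l & g %| G i.
Proof.
move=> ig; elim: l => [|a l IH].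
  by rewrite big_nil dvdp1 => /eqP s1; move: (ig.1); rewrite s1.
rewrite big_cons; case ga: (g %| G a).
  by move=> _; exists a => //; rewrite mem_head.
rewrite Gauss_dvdpr ?irred_coprime ?ga // => /IH [i il gi].
by exists i => //; rewrite in_cons il orbT.
Qed.

Lemma irred_monic_eq g h : g \is monic -> h \is monic -> irreducible_poly g ->
  irreducible_poly h -> g %| h -> g = h.
Proof.
move=> mg mh ig ih gh; apply/eqP; rewrite -eqp_monic //.
by apply: ih => //; rewrite neq_ltn ig.1 orbT.
Qed.

Definition goodfac (s : seq (poly * nat)) :=
  [/\ uniq [seq ge.1 | ge <- s],
      all (fun ge : poly * nat => (ge.1 \is monic) && (0 < ge.2)%N) s
    & (forall ge, ge \in s -> irreducible_poly ge.1)].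

Definition fprod (s : seq (poly * nat)) := \prod_(ge <- s) ge.1 ^+ ge.2.

Lemma goodfac_val s g e : goodfac s -> (g, e) \in s ->
  (g ^+ e %| fprod s) && ~~ (g ^+ e.+1 %| fprod s).
Proof.
case=> us ams irs ges.
have [mg e0] : (g \is monic) /\ (0 < e)%N by move/allP: ams => /(_ _ ges) /andP[].
have ig : irreducible_poly g := irs _ ges.
rewrite /fprod (big_rem _ ges) /=.
set r := \prod_(_ <- _) _.
have hperm := perm_to_rem ges.
have gnr : g \notin [seq ge.1 | ge <- rem (g, e) s].
  have := perm_uniq (perm_map (fun ge : poly * nat => ge.1) hperm).
  by rewrite us /= => /esym /andP[].
have cop : coprimep g r.
  apply: irred_coprime => //; apply/negP => /(irred_dvd_prod ig) [[h k] hin /=].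
  move/(irred_dvd_exp ig) => gh.
  have hs : (h, k) \in s by rewrite (perm_mem hperm) in_cons hin orbT.
  move/allP: ams => /(_ _ hs) /andP[mh _].
  have Egh := irred_monic_eq mg mh ig (irs _ hs) gh.
  by move/negP: gnr; apply; apply/mapP; exists (h, k).
rewrite dvdp_mulr ?dvdpp //=.
rewrite exprSr dvdp_mul2l; last by rewrite expf_neq0 // monic_neq0.
apply/negP => gr; have := coprimep_dvdl gr cop.
by rewrite coprimepp => /eqP s1; move: ig.1; rewrite s1.
Qed.

Lemma goodfac_char s g e : goodfac s -> g \is monic -> irreducible_poly g ->
  (0 < e)%N -> g ^+ e %| fprod s -> ~~ (g ^+ e.+1 %| fprod s) -> (g, e) \in s.
Proof.
move=> gs mg ig e0 d1 d2.
have gf : g %| fprod s by apply: dvdp_trans d1; rewrite -{1}[g]expr1 dvdp_exp2l.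
have [[h k] hs /= ghk] := irred_dvd_prod ig gf.
have gh := irred_dvd_exp ig ghk.
case: (gs) => _ ams irs.
move/allP: ams => /(_ _ hs) /andP[/= mh k0].
have Egh := irred_monic_eq mg mh ig (irs _ hs) gh.
move: hs; rewrite -Egh => hs.
have /andP[d3 d4] := goodfac_val gs hs.
have -> // : e = k.
apply/eqP; rewrite eqn_leq; apply/andP; split.
  rewrite leqNgt; apply/negP => ke; move/negP: d4; apply.
  by apply: dvdp_trans d1; rewrite dvdp_exp2l.
rewrite leqNgt; apply/negP => ek; move/negP: d2; apply.
by apply: dvdp_trans d3; rewrite dvdp_exp2l.
Qed.

Lemma goodfac_perm s s' : goodfac s -> goodfac s' -> fprod s = fprod s' ->
  perm_eq s s'.
Proof.
have key : forall s s', goodfac s -> goodfac s' -> fprod s = fprod s' ->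
    {subset s <= s'}.
  move=> s1 s2 g1 g2 E [g e] ges.
  have /andP[d1 d2] := goodfac_val g1 ges.
  case: (g1) => _ ams irs; move/allP: ams => /(_ _ ges) /andP[/= mg e0].
  by apply: goodfac_char => //; [exact: (irs _ ges) | rewrite -E | rewrite -E].
move=> g1 g2 E; apply: uniq_perm.
- by case: g1 => /map_uniq.
- by case: g2 => /map_uniq.
by move=> ge; apply/idP/idP; apply: key.
Qed.

Lemma size_fprod s : all (fun ge : poly * nat => ge.1 \is monic) s ->
  size (fprod s) = (\sum_(ge <- s) (size ge.1).-1 * ge.2)%N.+1.
Proof.
elim: s => [|[g e] s IH]; first by rewrite /fprod !big_nil size_poly1.
rewrite /= => /andP[mg ms]; rewrite /fprod !big_cons -/(fprod s) /=.
have mr : fprod s \is monic.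
  rewrite /fprod big_seq; apply: monic_prod => i /= ins; apply: monic_exp.
  by move/allP: ms => /(_ i ins).
rewrite size_monicM ?monic_exp ?monic_neq0 // IH //.
have := size_exp g e; rewrite polySpred ?expf_neq0 ?monic_neq0 //= => ->.
by rewrite addnS.
Qed.


Lemma fac_list f : f \is monic -> exists l : seq poly,
  [/\ all (fun g : poly => g \is monic) l,
      (forall g, g \in l -> irreducible_poly g) & f = \prod_(g <- l) g].
Proof.
have [n] := ubnP (size f); elim: n f => // n IH f sf mf.
have f0 := monic_neq0 mf.
case: (leqP (size f) 1) => s1.
  have sf1 : size f = 1%N by move: f0; rewrite -size_poly_gt0; lia.
  exists [::]; split => //; rewrite big_nil.
  by move/monicP: mf; rewrite /lead_coef sf1 /= => c0; rewrite (size1_polyC s1) c0.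
case: (pselect (irreducible_poly f)) => [irf|nirf].
  exists [:: f]; split; first by rewrite /= mf.
    by move=> g; rewrite mem_seq1 => /eqP ->.
  by rewrite big_seq1.
have : ~ (forall q : poly, size q != 1%N -> q %| f -> q %= f) by move=> H; apply: nirf; split.
move/existsNP => [q] /not_implyP [sq /not_implyP [qf nqf]].
have q0 : q != 0 by apply: contraTneq qf => ->; rewrite dvd0p.
have lq : lead_coef q != 0 by rewrite lead_coef_eq0.
set q' := (lead_coef q)^-1 *: q.
have mq' : q' \is monic by rewrite monicE lead_coefZ mulVf.
have eq' : q' %= q by rewrite eqp_scale // invr_eq0.
have sq' : size q' = size q by rewrite size_scale // invr_eq0.
have q'f : q' %| f by rewrite (eqp_dvdl _ eq').
have ltq : (size q' < size f)%N.
  rewrite ltn_neqAle dvdp_leq // andbT dvdp_size_eqp //.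
  apply/negP => e2; apply: nqf; apply: eqp_trans e2; by rewrite eqp_sym.
set r := f %/ q'.
have hr : f = r * q' by rewrite /r divpK.
have r0 : r != 0 by apply: contra_neq f0; rewrite hr => ->; rewrite mul0r.
have mr : r \is monic by rewrite -(monicMr _ mq') -hr.
have sizes : size f = (size r + size q').-1 by rewrite hr size_Mmonic.
have q'2 : (1 < size q')%N by rewrite sq' ltn_neqAle eq_sym sq size_poly_gt0.
clearbody r q'.
have Hr : (size r < n)%N. move: (size r) (size q') (size f) sizes q'2 sf => a b c; lia.
have Hq : (size q' < n)%N by move: (size q') (size f) ltq sf => a c; lia.
have [lr [mlr ilr Er]] := IH r Hr mr.
have [lq2 [mlq2 ilq2 Eq]] := IH q' Hq mq'.
exists (lr ++ lq2); split.
- by rewrite all_cat mlr mlq2.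
- by move=> g; rewrite mem_cat => /orP[/ilr|/ilq2].
by rewrite big_cat -Er -Eq.
Qed.

Lemma fac_exists f : f \is monic -> exists s, goodfac s /\ f = fprod s.
Proof.
move=> /fac_list [l [ml il El]].
exists [seq (g, count_mem g l) | g <- undup l]; split; last first.
  by rewrite /fprod big_map /= prodr_undup_exp_count.
split.
- by rewrite -map_comp map_id undup_uniq.
- apply/allP => ge /mapP [g gin ->] /=; rewrite mem_undup in gin.
  rewrite (allP ml _ gin) /= lt0n; apply/eqP => /count_memPn.
  by rewrite gin.
by move=> ge /mapP [g gin ->] /=; apply: il; rewrite -mem_undup.
Qed.

End Fac.

Lemma lepair_trans : transitive lepair.
Proof.
move=> [b1 b2] [a1 a2] [c1 c2]; rewrite /lepair /=.
case/orP => [h1|/andP[/eqP e1 h1]]; case/orP => [h2|/andP[/eqP e2 h2]];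
  apply/orP; (try by left; lia); right; apply/andP; split; apply/eqP || idtac; lia.
Qed.

Lemma lepair_total : total lepair.
Proof.
move=> [a1 a2] [b1 b2]; rewrite /lepair /=.
case: (ltngtP a1 b1) => h //=; exact: leq_total.
Qed.

Lemma lepair_anti : antisymmetric lepair.
Proof.
move=> [a1 a2] [b1 b2]; rewrite /lepair /= => /andP[h1 h2].
have e1 : a1 = b1.
  case/orP: h1 => [h1|/andP[/eqP -> _]] //; case/orP: h2 => [h2|/andP[/eqP -> _]] //; lia.
move: h1 h2; rewrite e1 ltnn eqxx /= => h1 h2.
by congr pair; apply/eqP; rewrite eqn_leq h1 h2.
Qed.

Lemma mem_seqs_upto (T : eqType) (A : seq T) k s :
  all (mem A) s -> (size s <= k)%N -> s \in seqs_upto A k.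
Proof.
elim: k s => [|k IH] [|a s] //=; 
move=> /andP[aA sA] sk.
rewrite in_cons /=; apply: (allpairs_f (fun a s => a :: s)) => //.
exact: IH.
Qed.

Lemma uniq_seqs_upto (T : eqType) (A : seq T) k : uniq A -> uniq (seqs_upto A k).
Proof.
move=> uA; elim: k => [|k IH] //=; apply/andP; split.
  by apply/negP => /allpairsP [[a s] [_ _]].
apply: allpairs_uniq => // [[a1 s1] [a2 s2]] _ _ /= [-> ->].
done.
Qed.

Lemma stypes_uniq n : uniq (stypes n).
Proof.
apply: filter_uniq; apply: uniq_seqs_upto.
apply: allpairs_uniq; rewrite ?iota_uniq //.
by move=> [a b] [c d] _ _ /= [-> ->].
Qed.

Lemma mem_stypes n s : (s \in stypes n) ->  sorted lepair s /\ stdeg s = n.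
Proof. by rewrite mem_filter => /andP[/andP[h1 /eqP h2] _]. Qed.

Lemma stypes_mem n s :
  sorted lepair s -> stdeg s = n ->
  all (fun de : nat * nat => (0 < de.1)%N && (0 < de.2)%N) s -> s \in stypes n.
Proof.
move=> ss sd pos; rewrite mem_filter ss sd eqxx /=.
have key : forall de, de \in s -> (de.1 * de.2 <= n)%N.
  move=> de des; rewrite -sd /stdeg (big_rem _ des) /=; exact: leq_addr.
apply: mem_seqs_upto.
  apply/allP => [[d e]] des; move/allP: pos => /(_ _ des) /= /andP[d0 e0].
  have := key _ des => /= h.
  apply: (allpairs_f (fun d e => (d, e))); rewrite !mem_iota; nia.
rewrite -sd /stdeg.
elim: s pos {ss sd key} => [|de s IH] //= /andP[/andP[h1 h2] hs].
rewrite big_cons; have := IH hs; have : (1 <= de.1 * de.2)%N by rewrite muln_gt0 h1.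
by move=> a b; rewrite -add1n; apply: leq_add a b.
Qed.

Section Conn.
Local Set Implicit Arguments. Local Unset Strict Implicit.
Variable K : finFieldType.
Local Notation poly := {poly K}.
Variable R : comNzRingType.
Variable x : nat -> R.
Hypothesis x0 : x 0%N = 1.

Definition Sm (a : K) (s : seq (poly * nat)) : nat :=
  (\sum_(ge <- s) (if ge.1 == ('X - a%:P)%R then ge.2 else 0))%N.

Lemma mup_irr (a : K) g e : g \is monic -> irreducible_poly g ->
  mup a (g ^+ e) = if g == ('X - a%:P)%R then e else 0%N.
Proof.
move=> mg ig; case: eqP => [->|ne]; first by rewrite mup_XsubCX eqxx.
apply: mupNroot; elim: e => [|e IH]; first by rewrite expr0 root1.
rewrite exprS rootM negb_or IH andbT.
rewrite root_factor_theorem; apply/negP => dv; apply: ne; apply/esym.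
apply: irred_monic_eq => //; [exact: monicXsubC | exact: irredp_XsubC].
Qed.

Lemma mup_fprod (a : K) s :
  all (fun ge : poly * nat => ge.1 \is monic) s ->
  (forall ge, ge \in s -> irreducible_poly ge.1) ->
  mup a (fprod s) = Sm a s.
Proof.
elim: s => [|[g e] s IH] /=.
  by move=> _ _; rewrite /fprod /Sm !big_nil mupNroot // root1.
move=> /andP[mg ms] irs.
have ig : irreducible_poly g by apply: (irs (g, e)); rewrite mem_head.
have mr : fprod s \is monic.
  rewrite /fprod big_seq; apply: monic_prod => i /= ins; apply: monic_exp.
  by move/allP: ms => /(_ i ins).
rewrite /fprod big_cons -/(fprod s) mupM ?expf_neq0 ?monic_neq0 //.
rewrite mup_irr // IH //; last by move=> ge ges; apply: irs; rewrite in_cons ges orbT.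
by rewrite /Sm big_cons.
Qed.

Lemma size2_XsubC (g : poly) : g \is monic -> size g = 2%N -> g = 'X - (- g`_0)%:P.
Proof.
move=> mg sg; apply/polyP => i; rewrite coefB coefX coefC.
case: i => [|[|i]] /=; first by rewrite sub0r opprK.
  by rewrite subr0; move/monicP: mg; rewrite /lead_coef sg.
by rewrite subr0 nth_default // sg.
Qed.

Lemma prod_Sm s : uniq [seq ge.1 | ge <- s] ->
  all (fun ge : poly * nat => ge.1 \is monic) s ->
  \prod_(a <- enum K) x (Sm a s) = \prod_(ge <- s | (size ge.1).-1 == 1%N) x ge.2.
Proof.
elim: s => [|[g e] s IH] /=.
  by move=> _ _; rewrite big_nil; apply: big1 => a _; rewrite /Sm big_nil x0.
move=> /andP[gs us] /andP[mg ms].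
have SmC : forall a, Sm a ((g, e) :: s) =
    ((if g == ('X - a%:P)%R then e else 0) + Sm a s)%N by move=> a; rewrite /Sm big_cons.
rewrite big_cons /=; case: ifP => sg.
  have sg2 : size g = 2%N by move: sg; case: (size g) => [|[|[|k]]].
  have Eg := size2_XsubC mg sg2.
  set a0 := - g`_0 in Eg.
  have Sa0 : Sm a0 s = 0%N.
    rewrite /Sm big_seq big1 // => ge ges; rewrite ifF //; apply/negP => /eqP E.
    by move/negP: gs; apply; apply/mapP; exists ge => //; rewrite E Eg.
  rewrite -IH // (bigD1_seq a0) ?mem_enum ?enum_uniq //=.
  rewrite [in RHS](bigD1_seq a0) ?mem_enum ?enum_uniq //=.
  rewrite SmC {1}Eg eqxx Sa0 x0 mul1r addn0; congr (_ * _).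
  apply: eq_bigr => a ne; rewrite SmC ifF //.
  rewrite Eg; apply/negP => /eqP E; move/negP: ne; apply.
  have := congr1 (fun q : poly => q`_0) E; rewrite !coefB coefX !coefC /= !sub0r.
  by move/oppr_inj => ->.
rewrite -IH //; apply: eq_bigr => a _; rewrite SmC ifF //.
by apply/negP => /eqP E; move: sg; rewrite E size_XsubC.
Qed.

End Conn.

Section Main.
Variable p : nat.
Variable R : comNzRingType.
Variable x : nat -> R.
Hypothesis x0 : x 0%N = 1.
Local Notation F := 'F_p.
Local Notation poly := {poly 'F_p}.

Definition typ (s : seq (poly * nat)) : seq (nat * nat) :=
  [seq ((size (ge.1 : {poly 'F_p})).-1, ge.2) | ge <- s].

Lemma stype_unique n (f : poly) : f \is monic -> size f = n.+1 ->
  exists sg0, [/\ sg0 \in stypes n, has_stype f sg0,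
    (forall sg, sg \in stypes n -> has_stype f sg -> sg = sg0) &
    \prod_(de <- sg0 | de.1 == 1%N) x de.2 = W p R x (enum F) f].
Proof.
move=> mf sf.
have [s [gs Ef]] := fac_exists mf.
case: (gs) => us ams irs.
have hp : perm_eq (sort lepair (typ s)) (typ s) by rewrite perm_sort.
exists (sort lepair (typ s)); split.
- apply: stypes_mem; first exact: sort_sorted lepair_total _.
    rewrite /stdeg (perm_big _ hp) big_map /=.
    have := size_fprod (s := s); rewrite -Ef sf => h; move: (h ltac:(by apply/allP => ge /(allP ams) /andP[])) => [->]; by apply: eq_bigr.
  rewrite all_sort all_map; apply/allP => ge ges /=.
  move/allP: ams => /(_ _ ges) /andP[_ ->]; rewrite andbT.
  by have := (irs _ ges).1; case: (size ge.1) => [|[|k]].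
- by exists s; split => //; rewrite perm_sym perm_sort.
- move=> sg sgin [s' [us' ams' irs' Ef' ps']].
  have gs' : goodfac s' by split.
  have pss := goodfac_perm gs gs' (etrans (esym Ef) Ef').
  have [sgs _] := mem_stypes _ _ sgin.
  apply: (sorted_eq lepair_trans lepair_anti) => //; first exact: sort_sorted lepair_total _.
  rewrite perm_sym perm_sort; apply: perm_trans _ ps'.
  exact: perm_map.
- rewrite (perm_big _ hp) big_map /= -prod_Sm //; last first.
    by apply/allP => ge /(allP ams) /andP[].
  rewrite /W; apply: eq_bigr => a _; rewrite Ef mup_fprod //.
  by apply/allP => ge /(allP ams) /andP[].
Qed.

End Main.

Theorem corollary2p3 (p : nat) (R : comNzRingType) (x : nat -> R) :
  prime p -> x 0%N = 1 ->
  (fun n => \sum_(sigma <- stypes n)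
              (Nst p sigma)%:R * \prod_(de <- sigma | de.1 == 1%N) x de.2)
  = psmul (psexp x p)
      (psmul (psexp (@ps_one_minus_t R) p) (ps_inv_one_minus (p%:R : R))).
Proof.
move=> pp x0.
have <- : A p R x (enum 'F_p) =
  psmul (psexp x p) (psmul (psexp (@ps_one_minus_t R) p) (ps_inv_one_minus (p%:R : R))).
  by rewrite A_iter ?enum_uniq // -cardE card_Fp // iter_ps.
apply: funext => n; rewrite /A sum_mons.
rewrite big_seq.
rewrite (eq_bigr (fun sg => \sum_(c : n.-tuple 'F_p)
   if `[< has_stype (mkmonic c) sg >] then \prod_(de <- sg | de.1 == 1%N) x de.2 else 0)); last first.
  move=> sg sgin; have [_ sd] := mem_stypes _ _ sgin.
  have -> : Nst p sg = #|[set c : n.-tuple 'F_p | `[< has_stype (mkmonic c) sg >]]|.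
    by rewrite /Nst sd.
  rewrite mulr_natl -sumr_const big_mkcond /=; apply: eq_bigr => c _.
  by rewrite inE.
rewrite -big_seq exchange_big /=; apply: eq_bigr => c _.
have [sg0 [sg0in hs0 un Eg]] :=
  @stype_unique p R x x0 n _ (monic_mkmonic _ _ c) (size_mkmonic _ _ c).
have Z : \sum_(i <- stypes n | i != sg0)
    (if `[< has_stype (mkmonic c) i >] then \prod_(de <- i | de.1 == 1%N) x de.2 else 0) = 0.
  rewrite big_seq_cond; apply: big1 => sg /andP[sgin ne].
  case: (pselect (has_stype (mkmonic c) sg)) => [h|h]; last by rewrite asboolF.
  by move: ne; rewrite (un _ sgin h) eqxx.
rewrite (bigD1_seq sg0) ?stypes_uniq // (asboolT hs0) -Eg.
rewrite Z; exact: addr0.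
Qed.
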